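(* Let $r>1$ and integers $N\ge1$, $K>2$. Define $$\gamma_1^*(r,K,N)=N\sum_{i=N}^\infty\frac1i\left(1-\frac1r\right)^i\left(1-\frac1{K-1}\right)^i,\qquad \gamma_2^*(r,K,N)=N\sum_{i=N}^\infty\frac1i\left(1-\frac1r\right)^i.$$ Then $$\frac{\gamma_1^*(r,K,N)}{\frac{r^N-(r-1)^N}{r^{N-1}}+\gamma_1^*(r,K,N)}\le\eta(r,K,N)\le\frac{\gamma_2^*(r,K,N)}{\frac{r^N-(r-1)^N}{r^{N-1}}+\gamma_2^*(r,K,N)}.$$
   Context: Single item auction with $N$ buyers whose values are i.i.d., each taking values $0<x^1<\dots<x^K$ with probabilities $p^i>0$, $\sum_ip^i=1$. Let $z^i=(\sum_{j=1}^ip^j)^N-(\sum_{j=1}^{i-1}p^j)^N$ and reserve index $t(x,p)=\max\{i: i\in\arg\max_{1\le k\le K}x^k\sum_{j=k}^Kp^j\}$. The efficiency loss ratio of the welfare-maximizing revenue-optimal auction is $\mathrm{ELR}_N(x,p)=\sum_{i=1}^{t(x,p)-1}z^ix^i/\sum_{i=1}^Kz^ix^i$. $\eta(r,K,N)$ is the supremum of $\mathrm{ELR}_N(x,p)$ over all such $p$ and all $x$ with $0<x^1<\dots<x^K\le rx^1$. *)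

(* Defs.v *)
From HB Require Import structures.
From mathcomp Require Import all_boot all_order all_algebra.
From mathcomp Require Import all_classical all_reals all_analysis.
Set Implicit Arguments. Unset Strict Implicit. Unset Printing Implicit Defensive.
Import Order.TTheory GRing.Theory Num.Theory.
Local Open Scope classical_set_scope.
Local Open Scope ring_scope.

(* Values x^1 < ... < x^K and probabilities p^1..p^K are modelled by
   functions nat -> R; only the indices 1..K are used. *)
Section Auction.
Variable R : realType.

Definition zcoef (N : nat) (p : nat -> R) (i : nat) : R :=
  (\sum_(1 <= j < i.+1) p j) ^+ N - (\sum_(1 <= j < i) p j) ^+ N.

Definition rev_at (K : nat) (x p : nat -> R) (k : nat) : R :=
  x k * \sum_(k <= j < K.+1) p j.

Definition max_rev (K : nat) (x p : nat -> R) : R :=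
  \big[Num.max/rev_at K x p 1]_(1 <= k < K.+1) rev_at K x p k.

Definition reserve_index (K : nat) (x p : nat -> R) : nat :=
  (\max_(1 <= i < K.+1 | rev_at K x p i == max_rev K x p) i)%N.

Definition ELR (K N : nat) (x p : nat -> R) : R :=
  (\sum_(1 <= i < reserve_index K x p) zcoef N p i * x i) /
  (\sum_(1 <= i < K.+1) zcoef N p i * x i).

Definition admissible (r : R) (K : nat) (x p : nat -> R) : Prop :=
  [/\ (forall i, (1 <= i <= K)%N -> 0 < p i),
      \sum_(1 <= i < K.+1) p i = 1,
      0 < x 1%N,
      (forall i, (1 <= i < K)%N -> x i < x i.+1)
    & x K <= r * x 1%N].

Definition eta_sup (r : R) (K N : nat) : R :=
  sup [set e | exists x p : nat -> R, admissible r K x p /\ e = ELR K N x p].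

Definition gamma_series (N : nat) (q : R) : R :=
  N%:R * limn (fun n => \sum_(N <= i < n) (i%:R)^-1 * q ^+ i).

Definition gamma1 (r : R) (K N : nat) : R :=
  gamma_series N ((1 - r^-1) * (1 - (K.-1)%:R^-1)).

Definition gamma2 (r : R) (N : nat) : R :=
  gamma_series N (1 - r^-1).

End Auction.

(* Main.v *)
Require Import Defs.
From HB Require Import structures.
From mathcomp Require Import all_boot all_order all_algebra.
From mathcomp Require Import all_classical all_reals all_analysis.
From mathcomp Require Import ring lra.
Import Order.TTheory GRing.Theory Num.Theory.
Local Open Scope ring_scope.

Local Open Scope ring_scope.
Section Alg.
Variable R : realType.
Implicit Types a b : R.
Lemma mv_bounds a b n : 0 <= a -> a <= b ->
  n%:R * a ^+ n.-1 * (b - a) <= b ^+ n - a ^+ n /\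
  b ^+ n - a ^+ n <= n%:R * b ^+ n.-1 * (b - a).
Proof.
move=> a0 ab; have b0 : 0 <= b by apply: le_trans ab.
have ba : 0 <= b - a by rewrite subr_ge0.
rewrite subrXX (mulrC (b - a)).
have hi (i : 'I_n) : (n.-1 = (n.-1 - i) + i)%N.
  by case: i => i /= hi; rewrite subnK // -ltnS prednK //; case: n hi.
have csum (c : R) : c *+ n = \sum_(i < n) c by rewrite sumr_const card_ord.
split; rewrite ler_wpM2r //.
- rewrite mulr_natl csum; apply: ler_sum => i _.
  rewrite [in leLHS](hi i) exprD ler_wpM2r ?exprn_ge0 //; exact: lerXn2r.
- rewrite mulr_natl csum; apply: ler_sum => i _.
  rewrite [in leRHS](hi i) exprD ler_wpM2l ?exprn_ge0 //; exact: lerXn2r.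
Qed.

Lemma T1 a b N m : (1 <= N)%N -> 0 <= a -> a <= b ->
  N%:R * (b ^+ (N + m) - a ^+ (N + m)) <= (N + m)%:R * b ^+ m * (b ^+ N - a ^+ N).
Proof.
move=> N1 a0 ab; have b0 : 0 <= b by apply: le_trans ab.
case: m => [|m]; first by rewrite addn0 expr0 mulr1.
have [hX _] := mv_bounds a b N a0 ab; have [_ hY] := mv_bounds a b m.+1 a0 ab.
move: hX hY; case: N N1 => // N _ /=.
set u := a ^+ N; set w := b ^+ m; set X := _ - a ^+ N.+1; set Y := _ - a ^+ m.+1.
have eq1 : b ^+ (N.+1 + m.+1) - a ^+ (N.+1 + m.+1) = b * w * X + a * u * Y.
  by rewrite /X /Y /u /w !exprD !exprS; ring.
rewrite eq1 natrD [b ^+ m.+1]exprS -/w => hX hY.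
have u0 : 0 <= u by exact: exprn_ge0.
have w0 : 0 <= w by exact: exprn_ge0.
have X0 : 0 <= X by apply: le_trans hX; rewrite !mulr_ge0 // subr_ge0.
set Nn := N.+1%:R; set M := m.+1%:R.
have Nn0 : 0 <= Nn by []. have M0 : 0 <= M by [].
have h1 : Nn * a * u * Y <= M * w * a * (Nn * u * (b - a)).
  have := ler_wpM2l (mulr_ge0 (mulr_ge0 Nn0 a0) u0) hY.
  by move=> /le_trans; apply; rewrite le_eqVlt; apply/orP; left; apply/eqP; ring.
have h2 : M * w * a * (Nn * u * (b - a)) <= M * w * b * X.
  apply: le_trans (_ : M * w * a * X <= _).
    by rewrite ler_wpM2l // !mulr_ge0.
  by rewrite ler_wpM2r // ler_wpM2l // mulr_ge0.
have e1 : Nn * (b*w*X + a*u*Y) = Nn*b*w*X + Nn*a*u*Y by ring.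
have e2 : (Nn + M) * (b*w) * X = Nn*b*w*X + M*w*b*X by ring.
rewrite e1 e2 lerD2l; exact: le_trans h1 h2.
Qed.

Lemma T2 a b N m : (1 <= N)%N -> 0 <= a -> a <= b ->
  (N + m)%:R * a ^+ m * (b ^+ N - a ^+ N) <= N%:R * (b ^+ (N + m) - a ^+ (N + m)).
Proof.
move=> N1 a0 ab; have b0 : 0 <= b by apply: le_trans ab.
case: m => [|m]; first by rewrite addn0 expr0 mulr1.
have [_ hX] := @mv_bounds a b N a0 ab; have [hY _] := @mv_bounds a b m.+1 a0 ab.
move: hX hY; case: N N1 => // N _ /=.
set v := b ^+ N; set w := a ^+ m; set X := _ - a ^+ N.+1; set Y := _ - a ^+ m.+1.
have eq1 : b ^+ (N.+1 + m.+1) - a ^+ (N.+1 + m.+1) = a * w * X + b * v * Y.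
  by rewrite /X /Y /v /w !exprD !exprS; ring.
rewrite eq1 natrD [a ^+ m.+1]exprS -/w => hX hY.
have v0 : 0 <= v by exact: exprn_ge0.
have w0 : 0 <= w by exact: exprn_ge0.
have ba : 0 <= b - a by rewrite subr_ge0.
have Y0 : 0 <= Y by apply: le_trans hY; rewrite !mulr_ge0.
set Nn := N.+1%:R; set M := m.+1%:R.
have Nn0 : 0 <= Nn by []. have M0 : 0 <= M by [].
have h1 : M * a * w * X <= Nn * v * a * (M * w * (b - a)).
  have := ler_wpM2l (mulr_ge0 (mulr_ge0 M0 a0) w0) hX.
  by move=> /le_trans; apply; rewrite le_eqVlt; apply/orP; left; apply/eqP; ring.
have h2 : Nn * v * a * (M * w * (b - a)) <= Nn * v * b * Y.
  apply: le_trans (_ : Nn * v * a * Y <= _).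
    by rewrite ler_wpM2l // !mulr_ge0.
  by rewrite ler_wpM2r // ler_wpM2l // mulr_ge0.
have e1 : Nn * (a*w*X + b*v*Y) = Nn*a*w*X + Nn*b*v*Y by ring.
have e2 : (Nn + M) * (a*w) * X = Nn*a*w*X + M*a*w*X by ring.
rewrite e1 e2 lerD2l; apply: le_trans h1 (le_trans h2 _).
by rewrite le_eqVlt; apply/orP; left; apply/eqP; ring.
Qed.
End Alg.

Import numFieldNormedType.Exports.
Local Open Scope classical_set_scope.
Local Open Scope ring_scope.

Section Ser.
Variable R : realType.
Implicit Types a b v w : R.

Definition Tn (N : nat) (v : R) (n : nat) : R := \sum_(N <= k < n) (k%:R)^-1 * v ^+ k.
Definition Pp (N : nat) (v : R) : R := \sum_(i < N) v ^+ i.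

Lemma nd_sum (N : nat) (F : nat -> R) : (forall k, 0 <= F k) ->
  {homo (fun n => \sum_(N <= k < n) F k) : n m / (n <= m)%N >-> n <= m}.
Proof.
move=> F0; apply/nondecreasing_seqP => n.
case: (leqP N n) => h; first by rewrite big_nat_recr //= lerDl.
by rewrite big_geq ?(ltnW h) // big_geq.
Qed.

Lemma geo_sum v n : (1 - v) * \sum_(i < n) v ^+ i = 1 - v ^+ n.
Proof. by rewrite -[1 - v ^+ n]opprB subrX1 -mulNr opprB. Qed.

Lemma geo_le v n : 0 <= v < 1 -> \sum_(i < n) v ^+ i <= (1 - v)^-1.
Proof.
move=> /andP[v0 v1]; have h : 0 < 1 - v by rewrite subr_gt0.
rewrite -(ler_pM2l h) mulfV ?gt_eqF // geo_sum lerBlDr lerDl exprn_ge0 //.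
Qed.

Lemma Tn_nd N v : 0 <= v -> {homo Tn N v : n m / (n <= m)%N >-> n <= m}.
Proof. by move=> v0; apply: nd_sum => k; rewrite mulr_ge0 ?exprn_ge0 ?invr_ge0. Qed.

Lemma Tn_bound N v n : (1 <= N)%N -> 0 <= v < 1 -> Tn N v n <= (1 - v)^-1.
Proof.
move=> N1 hv; have /andP[v0 v1] := hv.
apply: le_trans (@geo_le v n hv).
apply: le_trans (_ : \sum_(N <= k < n) v ^+ k <= _).
  apply: ler_sum_nat => k /andP[Nk _].
  rewrite ler_piMl ?exprn_ge0 // invf_le1 ?ler1n ?ltr0n; exact: leq_trans Nk.
rewrite -(big_mkord xpredT) /=.
case: (leqP N n) => h; last first.
  by rewrite big_geq ?(ltnW h) // sumr_ge0 // => i _; exact: exprn_ge0.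
rewrite (@big_cat_nat _ _ _ N 0 n) //= lerDr sumr_ge0 // => i _; exact: exprn_ge0.
Qed.

Lemma Tn_cvg N v : (1 <= N)%N -> 0 <= v < 1 -> cvgn (Tn N v).
Proof.
move=> N1 hv; have /andP[v0 _] := hv.
apply: nondecreasing_is_cvgn; first exact: Tn_nd.
by exists (1 - v)^-1 => _ [n _ <-]; apply: Tn_bound.
Qed.


Lemma lim_le (u w : R^nat) : cvgn u -> cvgn w -> (forall n, u n <= w n) ->
  limn u <= limn w.
Proof.
move=> cu cw h; apply: (@ler_lim _ _ _ _ u w cu cw) => //.
exact: nearW.
Qed.

Lemma limMc (u : R^nat) c : cvgn u -> limn (fun n => u n * c) = limn u * c.
Proof.
move=> cu; have -> : (fun n => u n * c) = u \* cst c by [].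
rewrite (@limM _ _ _ _ u (cst c)) //.
  by rewrite lim_cst.
apply: is_cvg_cst.
Qed.

Lemma limBc (u w : R^nat) : cvgn u -> cvgn w ->
  limn (fun n => u n - w n) = limn u - limn w.
Proof. by move=> cu cw; have -> : (fun n => u n - w n) = u - w by []; rewrite limB. Qed.

Lemma cvgBc (u w : R^nat) : cvgn u -> cvgn w -> cvgn (fun n => u n - w n).
Proof. by move=> cu cw; have -> : (fun n => u n - w n) = u - w by []; exact: is_cvgB. Qed.

Lemma Tdiff N a b n : Tn N b n - Tn N a n =
  \sum_(N <= k < n) (k%:R)^-1 * (b ^+ k - a ^+ k).
Proof. by rewrite /Tn -sumrB; apply: eq_bigr => k _; rewrite mulrBr. Qed.

Lemma A_fin N a b n : (1 <= N)%N -> 0 <= a -> a <= b -> b < 1 ->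
  N%:R * (Tn N b n - Tn N a n) <= (b ^+ N - a ^+ N) / (1 - b).
Proof.
move=> N1 a0 ab b1; have b0 : 0 <= b by apply: le_trans ab.
have X0 : 0 <= b ^+ N - a ^+ N by rewrite subr_ge0 lerXn2r.
rewrite Tdiff mulr_sumr.
apply: le_trans (_ : \sum_(N <= k < n) b ^+ (k - N) * (b ^+ N - a ^+ N) <= _).
  apply: ler_sum_nat => k /andP[Nk _].
  have := @T1 R a b N (k - N) N1 a0 ab; rewrite subnKC // => h.
  have k0 : 0 < k%:R :> R by rewrite ltr0n; exact: leq_trans Nk.
  rewrite mulrCA; have ki : 0 <= (k%:R : R)^-1 by rewrite invr_ge0 ltW.
  move: (ler_wpM2l ki h).
  by rewrite !mulrA mulVf ?gt_eqF // mul1r.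
rewrite -{1}(add0n N) big_addn.
under eq_bigr => i _ do rewrite addnK.
rewrite -mulr_suml big_mkord mulrC ler_wpM2l //; apply: geo_le.
by rewrite b0.
Qed.

Lemma B_fin N a b n : (1 <= N)%N -> 0 <= a -> a <= b ->
  (b ^+ N - a ^+ N) * \sum_(i < n) a ^+ i <= N%:R * (Tn N b (n + N) - Tn N a (n + N)).
Proof.
move=> N1 a0 ab; have b0 : 0 <= b by apply: le_trans ab.
rewrite Tdiff [X in _ <= X]mulr_sumr.
apply: le_trans (_ : \sum_(N <= k < n + N) a ^+ (k - N) * (b ^+ N - a ^+ N) <= _); last first.
  apply: ler_sum_nat => k /andP[Nk _].
  have := @T2 R a b N (k - N) N1 a0 ab; rewrite subnKC // => h.
  have k0 : 0 < k%:R :> R by rewrite ltr0n; exact: leq_trans Nk.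
  rewrite mulrCA; have ki : 0 <= (k%:R : R)^-1 by rewrite invr_ge0 ltW.
  move: (ler_wpM2l ki h).
  by rewrite !mulrA mulVf ?gt_eqF // mul1r.
rewrite [X in _ <= X](big_addn 0 _ N) addnK.
under eq_bigr => i _ do rewrite addnK.
by rewrite -mulr_suml big_mkord mulrC.
Qed.

Lemma Ival_diff N a b : (1 <= N)%N -> 0 <= a < 1 -> 0 <= b < 1 ->
  gamma_series N b - gamma_series N a = N%:R * limn (fun n => Tn N b n - Tn N a n).
Proof.
move=> N1 ha hb; rewrite limBc; first by rewrite mulrBr.
all: exact: Tn_cvg.
Qed.


Lemma cvgMc (u : R^nat) c : cvgn u -> cvgn (fun n => u n * c).
Proof.
move=> cu; have -> : (fun n => u n * c) = u \* cst c by [].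
apply: is_cvgM => //; exact: is_cvg_cst.
Qed.

Lemma A_lim N a b : (1 <= N)%N -> 0 <= a -> a <= b -> b < 1 ->
  gamma_series N b - gamma_series N a <= (b ^+ N - a ^+ N) / (1 - b).
Proof.
move=> N1 a0 ab b1; have b0 : 0 <= b by apply: le_trans ab.
have ha : 0 <= a < 1 by rewrite a0 (le_lt_trans ab b1).
have hb : 0 <= b < 1 by rewrite b0 b1.
have N0 : 0 < N%:R :> R by rewrite ltr0n.
rewrite Ival_diff // mulrC -ler_pdivlMr //.
apply: limr_le; first by apply: cvgBc; exact: Tn_cvg.
apply: nearW => n /=; rewrite ler_pdivlMr // mulrC; exact: A_fin.
Qed.

Lemma B_lim N a b : (1 <= N)%N -> 0 <= a -> a <= b -> b < 1 ->
  (b ^+ N - a ^+ N) / (1 - a) <= gamma_series N b - gamma_series N a.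
Proof.
move=> N1 a0 ab b1; have b0 : 0 <= b by apply: le_trans ab.
have a1 : a < 1 by exact: (le_lt_trans ab b1).
have ha : 0 <= a < 1 by rewrite a0 a1.
have hb : 0 <= b < 1 by rewrite b0 b1.
have N0 : 0 < N%:R :> R by rewrite ltr0n.
have pa : 0 < 1 - a by rewrite subr_gt0.
rewrite Ival_diff //.
set d := fun n => Tn N b n - Tn N a n.
have cd : cvgn d by apply: cvgBc; exact: Tn_cvg.
have nd : {homo d : n m / (n <= m)%N >-> n <= m}.
  have -> : d = (fun n => \sum_(N <= k < n) (k%:R)^-1 * (b ^+ k - a ^+ k)).
    by apply: funext => n; rewrite /d Tdiff.
  apply: nd_sum => k; rewrite mulr_ge0 // ?invr_ge0 // subr_ge0 lerXn2r //.
set X := b ^+ N - a ^+ N.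
have hn n : X / (1 - a) - N%:R * limn d <= X / (1 - a) * a ^+ n.
  have h1 := @B_fin N a b n N1 a0 ab.
  have h2 := nondecreasing_cvgn_le nd cd (n + N).
  have h3 : X * \sum_(i < n) a ^+ i <= N%:R * limn d.
    apply: le_trans h1 _; rewrite ler_wpM2l //; exact: ltW.
  have h4 : X * \sum_(i < n) a ^+ i = X / (1 - a) - X / (1 - a) * a ^+ n.
    have : (1 - a) * \sum_(i < n) a ^+ i = 1 - a ^+ n by exact: geo_sum.
    move=> /(congr1 (fun t => t / (1 - a))); rewrite mulrC mulKf ?gt_eqF // => ->.
    by rewrite mulrA mulrBr mulr1 mulrBl mulrAC.
  move: h3; rewrite h4; lra.
suff : X / (1 - a) - N%:R * limn d <= 0 by rewrite subr_le0.
have e0 : limn (geometric (X / (1 - a)) a) = 0.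
  apply: cvg_lim => //; apply: cvg_geometric; rewrite ger0_norm //.
rewrite -e0; apply: limr_ge.
  by apply: cvgP (cvg_geometric _ _); rewrite ger0_norm.
by apply: nearW => n /=; exact: hn.
Qed.

Lemma C_fin N v w n : 0 <= v -> v <= w ->
  Tn N v n * Pp N w <= Tn N w n * Pp N v.
Proof.
move=> v0 vw; have w0 : 0 <= w by apply: le_trans vw.
rewrite /Tn mulr_suml [X in _ <= X]mulr_suml.
apply: ler_sum_nat => k /andP[Nk _]; rewrite /Pp !mulr_sumr.
apply: ler_sum => j _.
have jk : (j <= k)%N by apply: leq_trans (ltnW (ltn_ord j)) Nk.
rewrite -!mulrA ler_wpM2l ?invr_ge0 // -(subnK jk) !exprD.
rewrite -!mulrA [v ^+ j * _]mulrC ler_wpM2r ?mulr_ge0 ?exprn_ge0 //.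
exact: lerXn2r.
Qed.

Lemma C_lim N v w : (1 <= N)%N -> 0 <= v -> v <= w -> w < 1 ->
  gamma_series N v * Pp N w <= gamma_series N w * Pp N v.
Proof.
move=> N1 v0 vw w1; have w0 : 0 <= w by apply: le_trans vw.
have hv : 0 <= v < 1 by rewrite v0 (le_lt_trans vw w1).
have hw : 0 <= w < 1 by rewrite w0 w1.
rewrite /gamma_series -!mulrA ler_wpM2l //.
change (limn (Tn N v) * Pp N w <= limn (Tn N w) * Pp N v).
rewrite -!limMc; try exact: Tn_cvg.
apply: lim_le; try (apply: cvgMc; exact: Tn_cvg).
move=> n; exact: C_fin.
Qed.

End Ser.
Arguments Tn {R}. Arguments Pp {R}.

Import numFieldNormedType.Exports.
Local Open Scope classical_set_scope.
Local Open Scope ring_scope.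

Lemma bigmax_attained (m n : nat) (P : pred nat) i0 : (m <= i0 < n)%N -> P i0 -> (0 < m)%N ->
  (m <= \max_(m <= i < n | P i) i < n)%N && P (\max_(m <= i < n | P i) i)%N.
Proof.
move=> hi0 Pi0 m0.
have : (\max_(m <= i < n | P i) i == 0)%N ||
       ((m <= \max_(m <= i < n | P i) i < n)%N && P (\max_(m <= i < n | P i) i)%N).
  rewrite big_seq_cond; apply: (big_ind (fun y => (y == 0)%N || ((m <= y < n)%N && P y))).
  - by rewrite eqxx.
  - by move=> u v hu hv; case: (leqP u v).
  - by move=> i /andP[]; rewrite mem_index_iota => -> ->; rewrite orbT.
have hle : (i0 <= \max_(m <= i < n | P i) i)%N.
  by apply: leq_bigmax_seq => //; rewrite mem_index_iota.
case/orP => [/eqP h0 | //]; move: hle; rewrite h0 leqn0 => /eqP i00.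
by move: hi0; rewrite i00 => /andP[hm _]; move: (leq_trans m0 hm).
Qed.

Section Main.
Variable R : realType.

Lemma maxrev_ge K (x p : nat -> R) k : (1 <= k <= K)%N -> rev_at K x p k <= max_rev K x p.
Proof.
move=> hk; rewrite /max_rev; apply: le_bigmax_seq => //.
by rewrite mem_index_iota ltnS.
Qed.

Lemma maxrev_att K (x p : nat -> R) : (1 <= K)%N ->
  exists2 k, (1 <= k <= K)%N & max_rev K x p = rev_at K x p k.
Proof.
move=> K1; rewrite /max_rev big_seq.
apply: (big_ind (fun y => exists2 k, (1 <= k <= K)%N & y = rev_at K x p k)).
- by exists 1%N; rewrite ?lexx ?K1.
- move=> u v [k1 h1 ->] [k2 h2 ->]; rewrite /Num.max.
  by case: ifP => _; [exists k2 | exists k1].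
- by move=> i; rewrite mem_index_iota ltnS => hi; exists i.
Qed.

Lemma reserve_spec K (x p : nat -> R) : (1 <= K)%N ->
  let t := reserve_index K x p in (1 <= t <= K)%N /\ rev_at K x p t = max_rev K x p.
Proof.
move=> K1 t; have [k hk hM] := maxrev_att K x p K1.
have := @bigmax_attained 1 K.+1 (fun i => rev_at K x p i == max_rev K x p) k.
have Pk : rev_at K x p k == max_rev K x p by rewrite hM.
rewrite ltnS hk => /(_ isT Pk isT) /andP[ht /eqP ht2].
by rewrite /t /reserve_index -ltnS.
Qed.

End Main.

Import numFieldNormedType.Exports.
Local Open Scope classical_set_scope.
Local Open Scope ring_scope.

Section Up.
Variable R : realType.

Lemma gamma0 N : (1 <= N)%N -> gamma_series N (0 : R) = 0.
Proof.
move=> N1; rewrite /gamma_series.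
have -> : (fun n => \sum_(N <= i < n) (i%:R)^-1 * (0 : R) ^+ i) = cst 0.
  apply: funext => n; rewrite big_nat_cond big1 // => i /andP[/andP[Ni _] _].
  by rewrite expr0n; case: i Ni => [|i]; [rewrite leqn0 => /eqP N0; move: N1; rewrite N0 | rewrite mulr0].
by rewrite lim_cst // mulr0.
Qed.

Lemma gamma_ge0 N (q : R) : (1 <= N)%N -> 0 <= q -> q < 1 -> 0 <= gamma_series N q.
Proof.
move=> N1 q0 q1; have := @B_lim R N 0 q N1 (lexx 0) q0 q1.
rewrite gamma0 // !subr0 => h; apply: le_trans h.
by rewrite divr1 subr_ge0 lerXn2r ?nnegrE.
Qed.

Lemma Pp_ge1 N (v : R) : (1 <= N)%N -> 0 <= v -> 1 <= Pp N v.
Proof.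
move=> N1 v0; rewrite /Pp; case: N N1 => // N _.
rewrite big_ord_recl expr0 lerDl sumr_ge0 // => i _; exact: exprn_ge0.
Qed.

Lemma frac_le (L G c g : R) : 0 <= L -> 0 < G -> 0 < c -> 0 <= g ->
  c * L <= g * G -> L / (L + G) <= g / (c + g).
Proof.
move=> L0 G0 c0 g0 h.
have LG : 0 < L + G by lra.
have cg : 0 < c + g by lra.
rewrite ler_pdivrMr // mulrAC ler_pdivlMr //.
nra.
Qed.


Lemma xmono r K (x p : nat -> R) : admissible r K x p ->
  forall i j, (1 <= i)%N -> (i <= j)%N -> (j <= K)%N -> x i <= x j.
Proof.
move=> [_ _ _ xinc _] i j i1 ij jK.
have H : forall d, (i + d <= K)%N -> x i <= x (i + d)%N.
  elim=> [|d IH] h; first by rewrite addn0.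
  have h' : (i + d < K)%N by rewrite -addnS.
  apply: le_trans (IH (ltnW h')) _; rewrite addnS; apply/ltW/xinc.
  by rewrite h' andbT (leq_trans i1 (leq_addr _ _)).
by move: (H (j - i)%N); rewrite subnKC //; apply.
Qed.

Lemma upper_inst r K N (x p : nat -> R) : 1 < r -> (1 <= N)%N -> (1 <= K)%N ->
  admissible r K x p ->
  let t := reserve_index K x p in
  let L := \sum_(1 <= i < t) zcoef N p i * x i in
  let Gs := \sum_(t <= i < K.+1) zcoef N p i * x i in
  [/\ 0 <= L, 0 < Gs & Pp N (1 - r^-1) * L <= gamma_series N (1 - r^-1) * Gs].
Proof.
move=> r1 N1 K1 adm t L Gs.
have xm := @xmono r K x p adm.
case: adm => ppos psum x1pos xinc xK.
have [/andP[t1 tK] hrev] := @reserve_spec R K x p K1; rewrite -/t in t1 tK hrev.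
pose G i := \sum_(1 <= j < i) p j.
pose S i := \sum_(i <= j < K.+1) p j.
have zG i : zcoef N p i = G i.+1 ^+ N - G i ^+ N by [].
have p0 i : (1 <= i <= K)%N -> 0 <= p i by move=> h; exact: ltW (ppos i h).
have GS i : (1 <= i <= K.+1)%N -> G i = 1 - S i.
  move=> /andP[i1 iK]; rewrite -psum (@big_cat_nat _ _ _ i 1 K.+1) //=.
  by rewrite /G /S addrK.
have Gmono i j : (1 <= i)%N -> (i <= j)%N -> (j <= K.+1)%N -> G i <= G j.
  move=> i1 ij jK; rewrite /G (@big_cat_nat _ _ _ i 1 j) //= lerDl.
  rewrite big_nat_cond sumr_ge0 // => k /andP[/andP[ik kj] _]; apply: p0.
  by rewrite (leq_trans i1 ik) -ltnS (leq_trans kj jK).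
have G1 : G 1%N = 0 by rewrite /G big_geq.
have GK : G K.+1 = 1 by [].
have Gge0 i : (1 <= i <= K.+1)%N -> 0 <= G i.
  by move=> /andP[i1 iK]; rewrite -G1; apply: Gmono.
have xpos i : (1 <= i <= K)%N -> 0 < x i.
  by move=> /andP[i1 iK]; apply: lt_le_trans x1pos _; apply: xm.
set s := S t.
have Gt : G t = 1 - s by apply: GS; rewrite t1 leqW.
have s0 : 0 <= s.
  rewrite /s /S big_nat_cond sumr_ge0 // => k /andP[/andP[tk kK] _]; apply: p0.
  by rewrite (leq_trans t1 tk) -ltnS.
set M := max_rev K x p.
have xt0 : 0 < x t by apply: xpos; rewrite t1 tK.
have hM : M = x t * s by rewrite /M -hrev.
have M0 : 0 <= M by rewrite hM mulr_ge0 // ltW.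
have r0 : 0 < r by lra.
have rinv0 : 0 < r^-1 by rewrite invr_gt0.
have s_lb : r^-1 <= s.
  have h1 : x 1%N <= M.
    have := @maxrev_ge R K x p 1%N K1.
    by rewrite /rev_at psum mulr1.
  have h2 : x t <= r * x 1%N by apply: le_trans xK; apply: xm.
  have h3 : x 1%N * 1 <= x 1%N * (r * s).
    rewrite mulr1; apply: le_trans h1 _; rewrite hM mulrCA mulrC.
    have -> : r * (x 1%N * s) = s * (r * x 1%N) by ring.
    by rewrite ler_wpM2l.
  rewrite ler_pM2l // in h3.
  have := ler_wpM2l (ltW rinv0) h3.
  by rewrite mulr1 mulrA mulVf ?gt_eqF // mul1r.
have Gt0 : 0 <= G t by apply: Gge0; rewrite t1 leqW.
have s1 : s <= 1 by move: Gt0; rewrite Gt; lra.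
set q := 1 - r^-1.
have q1 : q < 1 by rewrite /q ltrBlDr ltrDl.
have q0 : 0 <= q by rewrite /q subr_ge0 invf_le1 // ltW.
have Gtq : G t <= q by rewrite Gt /q lerB.
have gq0 : 0 <= gamma_series N q by apply: gamma_ge0.
have L0 : 0 <= L.
  rewrite /L big_nat_cond sumr_ge0 // => i /andP[/andP[i1 it] _].
  have iK : (i <= K)%N by apply: leq_trans (ltnW it) tK.
  have xi0 : 0 <= x i by apply/ltW/xpos; rewrite i1 iK.
  have Gi0 : 0 <= G i by apply: Gge0; rewrite i1 leqW.
  have Gii : G i <= G i.+1 by apply: Gmono => //; rewrite leqW // (leq_trans it).
  by rewrite mulr_ge0 // zG subr_ge0 lerXn2r ?nnegrE // (le_trans Gi0 Gii).
have Lb : L <= M * gamma_series N (1 - s).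
  apply: le_trans (_ : \sum_(1 <= i < t) M * (gamma_series N (G i.+1) - gamma_series N (G i)) <= _).
    apply: ler_sum_nat => i /andP[i1 it].
    have iK : (i <= K)%N by apply: leq_trans (ltnW it) tK.
    have Gi0 : 0 <= G i by apply: Gge0; rewrite i1 leqW.
    have Gii : G i <= G i.+1 by apply: Gmono => //; rewrite ltnS.
    have Git : G i.+1 <= G t by apply: Gmono => //; rewrite leqW.
    have Gi1 : G i.+1 < 1 by apply: le_lt_trans Git (le_lt_trans Gtq q1).
    have Si : 0 < 1 - G i by rewrite subr_gt0 (le_lt_trans Gii Gi1).
    have z0 : 0 <= zcoef N p i by rewrite zG subr_ge0 lerXn2r ?nnegrE // (le_trans Gi0 Gii).
    have hx : x i <= M / (1 - G i).
      rewrite ler_pdivlMr // GS ?i1 ?ltnS ?(leq_trans iK) // subKr.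
      by apply: maxrev_ge; rewrite i1 iK.
    apply: le_trans (ler_wpM2l z0 hx) _.
    rewrite mulrCA ler_wpM2l // mulrC.
    rewrite zG mulrC; exact: (@B_lim R N (G i) (G i.+1) N1 Gi0 Gii Gi1).
  rewrite -mulr_sumr ler_wpM2l //.
  rewrite (telescope_sumr (fun i => gamma_series N (G i)) t1) G1 gamma0 // subr0 Gt.
  by [].
have Gsb : x t * (s * Pp N (1 - s)) <= Gs.
  have -> : s * Pp N (1 - s) = 1 - (1 - s) ^+ N.
    by rewrite -geo_sum subKr.
  apply: le_trans (_ : \sum_(t <= i < K.+1) zcoef N p i * x t <= _).
    rewrite -mulr_suml [X in X <= _]mulrC; apply: ler_wpM2r; first exact: ltW.
    under eq_bigr => i _ do rewrite zG.
    rewrite (telescope_sumr (fun i => G i ^+ N) (leq_trans tK (leqnSn K))) GK expr1n -Gt.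
    by [].
  apply: ler_sum_nat => i /andP[ti iK].
  have i1 : (1 <= i)%N by apply: leq_trans t1 ti.
  have Gi0 : 0 <= G i by apply: Gge0; rewrite i1 ltnW.
  have Gii : G i <= G i.+1 by apply: Gmono.
  have z0 : 0 <= zcoef N p i by rewrite zG subr_ge0 lerXn2r ?nnegrE // (le_trans Gi0 Gii).
  rewrite ler_wpM2l //; apply: xm => //.
have Pq0 : 0 <= Pp N q by apply: le_trans ler01 (@Pp_ge1 N q N1 q0).
have Ps : 1 <= Pp N (1 - s) by apply: (@Pp_ge1 N (1 - s) N1); rewrite subr_ge0.
split => //.
  apply: lt_le_trans Gsb; rewrite mulr_gt0 // mulr_gt0 //; first exact: lt_le_trans rinv0 s_lb.
  exact: lt_le_trans ltr01 Ps.
have hC : gamma_series N (1 - s) * Pp N q <= gamma_series N q * Pp N (1 - s).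
  apply: (@C_lim R N (1 - s) q N1); first by rewrite subr_ge0.
    by rewrite -Gt.
  exact: q1.
apply: le_trans (_ : Pp N q * (M * gamma_series N (1 - s)) <= _).
  by rewrite ler_wpM2l.
have e1 : Pp N q * (M * gamma_series N (1 - s)) =
  (x t * s) * (gamma_series N (1 - s) * Pp N q) by rewrite hM; ring.
rewrite e1; apply: le_trans (_ : x t * s * (gamma_series N q * Pp N (1 - s)) <= _).
  by rewrite ler_wpM2l // mulr_ge0 // ltW.
have e2 : x t * s * (gamma_series N q * Pp N (1 - s)) =
  gamma_series N q * (x t * (s * Pp N (1 - s))) by ring.
by rewrite e2 ler_wpM2l.
Qed.

End Up.

Import numFieldNormedType.Exports.
Local Open Scope classical_set_scope.
Local Open Scope ring_scope.

Section Fin.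
Variable R : realType.

Lemma c_eq (r : R) N : 1 < r -> (1 <= N)%N ->
  (r ^+ N - (r - 1) ^+ N) / r ^+ N.-1 = Pp N (1 - r^-1).
Proof.
move=> r1 N1; have r0 : r != 0 by rewrite gt_eqF // (lt_trans ltr01 r1).
have h := @geo_sum R (1 - r^-1) N; rewrite subKr in h.
have -> : Pp N (1 - r^-1) = r * (1 - (1 - r^-1) ^+ N).
  by rewrite -h /Pp mulrA mulfV // mul1r.
have -> : 1 - r^-1 = (r - 1) / r by field.
rewrite expr_div_n; clear h; case: N N1 => // n _ /=.
have rn : r ^+ n != 0 by rewrite expf_neq0.
rewrite exprS; field; by rewrite rn r0.
Qed.

Lemma upper_ELR (r : R) K N (x p : nat -> R) : 1 < r -> (1 <= N)%N -> (1 <= K)%N ->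
  admissible r K x p ->
  ELR K N x p <= gamma2 r N / (Pp N (1 - r^-1) + gamma2 r N).
Proof.
move=> r1 N1 K1 adm.
have [/andP[t1 tK] _] := @reserve_spec R K x p K1.
have [L0 G0 h] := @upper_inst R r K N x p r1 N1 K1 adm.
rewrite /ELR (@big_cat_nat _ _ _ (reserve_index K x p) 1 K.+1) //=; last exact: leqW.
have r0 : 0 < r by apply: lt_trans ltr01 r1.
have q0 : 0 <= 1 - r^-1 by rewrite subr_ge0 invf_le1 // ltW.
have q1 : 1 - r^-1 < 1 by rewrite ltrBlDr ltrDl invr_gt0.
apply: frac_le => //.
  exact: lt_le_trans ltr01 (@Pp_ge1 R N _ N1 q0).
exact: gamma_ge0.
Qed.

End Fin.

Import numFieldNormedType.Exports.
Local Open Scope classical_set_scope.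
Local Open Scope ring_scope.

Section Low.
Variable R : realType.
Variables (r : R) (K N : nat).
Hypotheses (r1 : 1 < r) (N1 : (1 <= N)%N) (K2 : (2 < K)%N).

Let q := 1 - r^-1.
Let d := q / (K.-1)%:R.
Definition p0 (j : nat) : R := if (j < K)%N then d else r^-1.
Definition g (i : nat) : R := (i.-1)%:R * d.
Definition x0 (i : nat) : R := (1 - g i)^-1.

Let r0 : 0 < r. Proof. exact: lt_trans ltr01 r1. Qed.
Let rinv0 : 0 < r^-1. Proof. by rewrite invr_gt0 r0. Qed.
Let q0 : 0 < q. Proof. by rewrite /q subr_gt0 invf_lt1 // r0. Qed.
Let q1 : q < 1. Proof. by rewrite /q ltrBlDr ltrDl. Qed.
Let Km : 0 < (K.-1)%:R :> R. Proof. by rewrite ltr0n; case: K K2 => [|[|k]]. Qed.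
Let d0 : 0 < d. Proof. by rewrite /d divr_gt0. Qed.

Lemma Gp i : (1 <= i <= K)%N -> \sum_(1 <= j < i) p0 j = g i.
Proof.
move=> /andP[i1 iK].
rewrite big_nat_cond (eq_bigr (fun _ => d)); last first.
  move=> j /andP[/andP[_ ji] _]; rewrite /p0 (leq_trans ji iK) //.
rewrite -big_nat_cond sumr_const_nat /g mulr_natl subn1 //.
Qed.

Lemma g0 i : 0 <= g i.
Proof. by rewrite /g mulr_ge0 // ltW. Qed.

Lemma gK : g K = q.
Proof. by rewrite /g /d mulrC mulfVK // gt_eqF. Qed.

Lemma g_le i j : (i <= j)%N -> g i <= g j.
Proof.
move=> ij; rewrite /g ler_pM2r // ler_nat -!subn1; exact: leq_sub2r.
Qed.

Lemma gq i : (i <= K)%N -> g i <= q.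
Proof. by move=> iK; rewrite -gK; apply: g_le. Qed.

Lemma g_lt1 i : (i <= K)%N -> 0 < 1 - g i.
Proof. by move=> iK; rewrite subr_gt0 (le_lt_trans (gq i iK) q1). Qed.

Lemma psum0 : \sum_(1 <= i < K.+1) p0 i = 1.
Proof.
have K1 : (1 <= K)%N by apply: leq_trans _ K2.
rewrite big_nat_recr //= Gp; last by rewrite K1 leqnn.
rewrite gK /p0 ltnn /q; exact: subrK.
Qed.

Lemma adm0 : admissible r K x0 p0.
Proof.
have K1 : (1 <= K)%N by apply: leq_trans _ K2.
split.
- move=> i /andP[_ iK]; rewrite /p0; case: ifP => _; [exact: d0 | exact: rinv0].
- exact: psum0.
- rewrite /x0 /g mul0r subr0 invr1; exact: ltr01.
- move=> i /andP[i1 iK]; rewrite /x0.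
  have h1 : 0 < 1 - g i.+1 by apply: g_lt1.
  have h2 : 0 < 1 - g i by apply: g_lt1; exact: ltnW.
  rewrite ltf_pV2 ?posrE //.
  rewrite ltrD2l ltrN2 /g ltr_pM2r // ltr_nat.
  by case: i i1 {iK h1 h2}.
- rewrite /x0 gK.
  have -> : 1 - q = r^-1 by rewrite /q opprB addrC subrK.
  rewrite invrK /g mul0r subr0 invr1 mulr1; exact: lexx.
Qed.

Let K1 : (1 <= K)%N. Proof. by apply: leq_trans _ K2. Qed.

Lemma rev0 i : (1 <= i <= K)%N -> rev_at K x0 p0 i = 1.
Proof.
move=> /andP[i1 iK]; rewrite /rev_at.
have : \sum_(1 <= j < K.+1) p0 j = 1 by exact: psum0.
rewrite (@big_cat_nat _ _ _ i 1 K.+1) //=; last exact: leqW.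
rewrite Gp ?i1 // => h.
have -> : \sum_(i <= i0 < K.+1) p0 i0 = 1 - g i by rewrite -h addrC addrK.
by rewrite /x0 mulVf // gt_eqF // g_lt1.
Qed.

Lemma t0 : reserve_index K x0 p0 = K.
Proof.
have [/andP[t1 tK] _] := @reserve_spec R K x0 p0 K1.
apply/eqP; rewrite eqn_leq tK /=.
rewrite /reserve_index; apply: leq_bigmax_seq; first by rewrite mem_index_iota K1 /=.
have [k hk ->] := @maxrev_att R K x0 p0 K1.
by rewrite !rev0 ?hk ?K1 ?leqnn.
Qed.

Lemma convex_step i : (1 <= i)%N ->
  g i ^+ N - g i.-1 ^+ N <= g i.+1 ^+ N - g i ^+ N.
Proof.
move=> i1.
have ga : 0 <= g i.-1 by exact: g0.
have gb : 0 <= g i by exact: g0.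
have ab : g i.-1 <= g i by apply: g_le; exact: leq_pred.
have bc : g i <= g i.+1 by apply: g_le.
have [_ h1] := @mv_bounds R (g i.-1) (g i) N ga ab.
have [h2 _] := @mv_bounds R (g i) (g i.+1) N gb bc.
apply: le_trans h1 (le_trans _ h2).
rewrite ler_wpM2l ?mulr_ge0 ?exprn_ge0 //.
rewrite /g; case: i i1 {ga gb ab bc h2} => // n _ /=.
rewrite -mulrBl -mulrBl ler_pM2r //.
rewrite -natr1 addrAC subrr add0r.
case: n => [|m] /=; first by rewrite subrr ler01.
by rewrite -natr1 addrAC subrr add0r.
Qed.

Lemma L_lb : gamma_series N (g K.-1) <= \sum_(1 <= i < K) zcoef N p0 i * x0 i.
Proof.
have e : \sum_(1 <= i < K) (gamma_series N (g i) - gamma_series N (g i.-1)) =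
    gamma_series N (g K.-1).
  rewrite (telescope_sumr (fun i => gamma_series N (g i.-1)) K1).
  have -> : g (1%N.-1) = 0 by rewrite /g mul0r.
  by rewrite gamma0 // subr0.
rewrite -e; apply: ler_sum_nat => i /andP[i1 iK].
have iK' : (i <= K)%N by exact: ltnW.
have ga : 0 <= g i.-1 by exact: g0.
have ab : g i.-1 <= g i by apply: g_le; exact: leq_pred.
have b1 : g i < 1 by rewrite -subr_gt0; exact: g_lt1.
apply: le_trans (@A_lim R N (g i.-1) (g i) N1 ga ab b1) _.
have z : zcoef N p0 i = g i.+1 ^+ N - g i ^+ N.
  by rewrite /zcoef Gp; [rewrite Gp // i1 iK' | rewrite iK].
rewrite z /x0; apply: ler_wpM2r; first by rewrite invr_ge0; apply: ltW; exact: g_lt1.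
exact: convex_step.
Qed.

Lemma frac_mono (a b c : R) : 0 <= a -> a <= b -> 0 < c -> a / (c + a) <= b / (b + c).
Proof.
move=> a0 ab c0.
have h1 : 0 < c + a by lra.
have h2 : 0 < b + c by lra.
rewrite ler_pdivrMr // mulrAC ler_pdivlMr //.
nra.
Qed.

Lemma lower_ELR : gamma1 r K N / (Pp N q + gamma1 r K N) <= ELR K N x0 p0.
Proof.
have eg : (1 - r^-1) * (1 - (K.-1)%:R^-1) = g K.-1.
  rewrite /g /d /q; case: K K2 Km => [|[|[|k]]] // _ Km' /=.
  have k0 : (k.+2)%:R != 0 :> R by rewrite pnatr_eq0.
  rewrite -[(k.+2)%:R]natr1 in k0 *.
  field.
  have h : 0 < 1 + k%:R + 1 :> R by have := ler0n R k; lra.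
  by rewrite (gt_eqF h) (gt_eqF r0).
rewrite /gamma1 eg /ELR t0 big_nat_recr /=; last exact: K1.
have eK : zcoef N p0 K * x0 K = Pp N q.
  have hz : zcoef N p0 K = 1 - q ^+ N.
    rewrite /zcoef psum0 expr1n Gp; last by rewrite K1 leqnn.
    by rewrite gK.
  have hP : (1 - q) * Pp N q = 1 - q ^+ N by exact: geo_sum.
  have q1' : 1 - q != 0 by rewrite subr_eq0 eq_sym lt_eqF.
  rewrite hz /x0 gK -hP mulrC mulKf //.
rewrite eK; apply: frac_mono.
- apply: gamma_ge0 => //; first exact: g0.
  by apply: le_lt_trans (gq _ (leq_pred K)) q1.
- exact: L_lb.
- by apply: lt_le_trans ltr01 (@Pp_ge1 R N q N1 (ltW q0)).
Qed.

End Low.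

Local Open Scope classical_set_scope.
Local Open Scope ring_scope.

Theorem proposition8 (R : realType) (r : R) (K N : nat) :
  1 < r -> (1 <= N)%N -> (2 < K)%N ->
  let c := (r ^+ N - (r - 1) ^+ N) / r ^+ N.-1 in
  gamma1 r K N / (c + gamma1 r K N) <= eta_sup r K N /\
  eta_sup r K N <= gamma2 r N / (c + gamma2 r N).
Proof.
move=> r1 N1 K2 c.
have K1 : (1 <= K)%N by exact: leq_trans _ K2.
have -> : c = Pp N (1 - r^-1) by exact: c_eq.
rewrite /eta_sup.
set B := gamma2 r N / (Pp N (1 - r^-1) + gamma2 r N).
set E := [set e | exists x p : nat -> R, admissible r K x p /\ e = ELR K N x p].
have ub : ubound E B.
  move=> e [x [p [adm ->]]]; exact: upper_ELR.
have inE : E (ELR K N (x0 R r K) (p0 R r K)).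
  by exists (x0 R r K), (p0 R r K); split; [exact: adm0 | ].
split.
- apply: le_trans (@lower_ELR R r K N r1 N1 K2) _.
  by apply: ub_le_sup; [exists B; exact: ub | exact: inE].
- by apply: ge_sup; [exists (ELR K N (x0 R r K) (p0 R r K)); exact: inE | exact: ub].
Qed.
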